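(* Let $\Omega\subset\mathbb{R}^2$ be a bounded domain and $u,v\in C^{2}(\Omega)\cap C^0(\bar\Omega)$. For $w\in\{u,v\}$ let $S(w)=\{(x,y)\in\Omega:w_x-y=0,\ w_y+x=0\}$ and $N(w)=(w_x-y,w_y+x)/\sqrt{(w_x-y)^2+(w_y+x)^2}$ on $\Omega\setminus S(w)$. Suppose $N(u)=N(v)$ in $\Omega\setminus(S(u)\cup S(v))$ and $u=v$ on $\partial\Omega$. Then $u=v$ in $\Omega$. *)

(* Defs.v *)
From Stdlib Require Import Reals.
From Coquelicot Require Import Coquelicot.
Open Scope R_scope.

Definition pt := (R * R)%type.

Definition dist2 (p q : pt) : R :=
  sqrt ((fst p - fst q)^2 + (snd p - snd q)^2).

Definition open2 (O : pt -> Prop) : Prop :=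
  forall p, O p -> exists r, 0 < r /\ forall q, dist2 p q < r -> O q.

Definition connected2 (O : pt -> Prop) : Prop :=
  forall U V : pt -> Prop, open2 U -> open2 V ->
    (forall p, O p -> U p \/ V p) ->
    (exists p, O p /\ U p) -> (exists p, O p /\ V p) ->
    exists p, O p /\ U p /\ V p.

Definition bounded2 (O : pt -> Prop) : Prop :=
  exists M, forall p, O p -> Rabs (fst p) <= M /\ Rabs (snd p) <= M.

Definition domain2 (O : pt -> Prop) : Prop :=
  (exists p, O p) /\ open2 O /\ connected2 O.

Definition closure2 (O : pt -> Prop) (p : pt) : Prop :=
  forall eps, 0 < eps -> exists q, O q /\ dist2 p q < eps.

Definition boundary2 (O : pt -> Prop) (p : pt) : Prop :=
  closure2 O p /\ ~ O p.

Definition dx (f : pt -> R) (p : pt) : R := Derive (fun t => f (t, snd p)) (fst p).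
Definition dy (f : pt -> R) (p : pt) : R := Derive (fun t => f (fst p, t)) (snd p).
Definition ex_dx (f : pt -> R) (p : pt) : Prop := ex_derive (fun t => f (t, snd p)) (fst p).
Definition ex_dy (f : pt -> R) (p : pt) : Prop := ex_derive (fun t => f (fst p, t)) (snd p).

Definition cont_within (A : pt -> Prop) (f : pt -> R) (p : pt) : Prop :=
  forall eps, 0 < eps -> exists delta, 0 < delta /\
    forall q, A q -> dist2 p q < delta -> Rabs (f q - f p) < eps.

Definition cont_at (f : pt -> R) (p : pt) : Prop := cont_within (fun _ => True) f p.

Definition C2_on (O : pt -> Prop) (f : pt -> R) : Prop :=
  forall p, O p ->
    ex_dx f p /\ ex_dy f p /\
    ex_dx (dx f) p /\ ex_dy (dx f) p /\ ex_dx (dy f) p /\ ex_dy (dy f) p /\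
    cont_at f p /\ cont_at (dx f) p /\ cont_at (dy f) p /\
    cont_at (dx (dx f)) p /\ cont_at (dy (dx f)) p /\
    cont_at (dx (dy f)) p /\ cont_at (dy (dy f)) p.

Definition C0_closure (O : pt -> Prop) (f : pt -> R) : Prop :=
  forall p, closure2 O p -> cont_within (closure2 O) f p.

Definition Sset (w : pt -> R) (p : pt) : Prop :=
  dx w p - snd p = 0 /\ dy w p + fst p = 0.

Definition Nfield (w : pt -> R) (p : pt) : R * R :=
  let a := dx w p - snd p in
  let b := dy w p + fst p in
  (a / sqrt (a^2 + b^2), b / sqrt (a^2 + b^2)).

(* Main.v *)
Require Import Defs.
From Stdlib Require Import Reals Lra ClassicalEpsilon.
From Coquelicot Require Import Coquelicot.
Open Scope R_scope.

Lemma dist2_le x y u v : dist2 (x,y) (u,v) <= Rabs (x-u) + Rabs (y-v).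
Proof.
  unfold dist2; cbn [fst snd].
  rewrite <- (sqrt_pow2 (Rabs (x-u) + Rabs (y-v))) by (pose proof (Rabs_pos (x-u)); pose proof (Rabs_pos (y-v)); lra).
  apply sqrt_le_1_alt.
  rewrite <- (pow2_abs (x-u)), <- (pow2_abs (y-v)).
  pose proof (Rabs_pos (x-u)); pose proof (Rabs_pos (y-v)). nra.
Qed.

Lemma ball_R_iff (x e z : R) : @ball R_UniformSpace x e z <-> Rabs (z - x) < e.
Proof. reflexivity. Qed.

Lemma ball_locally_2d (P : pt -> Prop) x y r : 0 < r ->
  (forall q, dist2 (x,y) q < r -> P q) -> locally_2d (fun a b => P (a,b)) x y.
Proof.
  intros Hr H. exists (mkposreal (r/2) ltac:(lra)). simpl. intros a b Ha Hb.
  apply H. eapply Rle_lt_trans. apply dist2_le.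
  rewrite Rabs_minus_sym in Ha. rewrite Rabs_minus_sym in Hb. lra.
Qed.

Lemma cont_at_2d f x y : cont_at f (x,y) -> continuity_2d_pt (fun a b => f (a,b)) x y.
Proof.
  intros H eps. destruct (H eps (cond_pos eps)) as [d [Hd Hq]].
  apply (ball_locally_2d (fun q => Rabs (f q - f (x,y)) < eps) x y d Hd).
  intros q Hq'. apply Hq; auto.
Qed.

Lemma cont2d_1d_x (f : R -> R -> R) x y : continuity_2d_pt f x y -> continuous (fun t => f x t) y.
Proof.
  intros H. apply filterlim_locally. intros eps.
  apply (locally_2d_1d_const_x (fun u v => Rabs (f u v - f x y) < eps) x y (H eps)).
Qed.

Lemma cont2d_1d_y (f : R -> R -> R) x y : continuity_2d_pt f x y -> continuous (fun t => f t y) x.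
Proof.
  intros H. apply filterlim_locally. intros eps.
  apply (locally_2d_1d_const_y (fun u v => Rabs (f u v - f x y) < eps) x y (H eps)).
Qed.
Definition phi (e t : R) : R := (t-e)*Rabs(t-e) + (t-e)^2.
Definition dphi (e t : R) : R := 2*Rabs(t-e) + 2*(t-e).

Lemma is_derive_phi e t : is_derive (phi e) t (dphi e t).
Proof.
  destruct (Rtotal_order (t-e) 0) as [Hn|[Hz|Hp]].
  - apply (is_derive_ext_loc (fun _ => 0)).
    + exists (mkposreal (e-t) ltac:(lra)). intros z Hz. rewrite ball_R_iff in Hz. simpl in Hz.
      apply Rabs_def2 in Hz. change (@eq R 0 (phi e z)). unfold phi. rewrite Rabs_left by lra. ring.
    + unfold dphi. rewrite Rabs_left by lra. replace (2 * - (t - e) + 2 * (t - e)) with 0 by ring.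
      apply (is_derive_const (V:=R_NormedModule) 0).
  - apply is_derive_Reals. intros eps Heps. exists (mkposreal (eps/2) ltac:(lra)). intros h Hh0 Hh. simpl in Hh.
    unfold phi, dphi. replace (t + h - e) with h by lra. rewrite Hz. rewrite Rabs_R0.
    replace ((h * Rabs h + h ^ 2 - (0 * 0 + 0 ^ 2)) / h - (2 * 0 + 2 * 0)) with (Rabs h + h) by (field; auto).
    destruct (Rle_dec 0 h).
    + rewrite (Rabs_right h) in * by lra. rewrite Rabs_right by lra. lra.
    + rewrite (Rabs_left h) by lra. replace (-h+h) with 0 by ring. rewrite Rabs_R0. lra.
  - apply (is_derive_ext_loc (fun z => 2*(z-e)^2)).
    + exists (mkposreal (t-e) ltac:(lra)). intros z Hz. rewrite ball_R_iff in Hz. simpl in Hz.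
      apply Rabs_def2 in Hz. change (@eq R (2*(z-e)^2) (phi e z)). unfold phi. rewrite Rabs_right by lra. ring.
    + unfold dphi. rewrite Rabs_right by lra.
      auto_derive; auto. ring.
Qed.

Lemma phi_ge0 e t : 0 <= phi e t.
Proof. unfold phi. destruct (Rle_dec 0 (t-e)).
  - rewrite Rabs_right by lra. nra.
  - rewrite Rabs_left by lra. nra. Qed.

Lemma phi_le e t : t <= e -> phi e t = 0 /\ dphi e t = 0.
Proof. intros H. unfold phi, dphi. destruct (Req_dec t e) as [->|Hne].
  - replace (e-e) with 0 by ring. rewrite Rabs_R0. split; ring.
  - rewrite Rabs_left by lra. split; ring. Qed.

Lemma phi_gt e t : e < t -> 0 < phi e t.
Proof. intros H. unfold phi. rewrite Rabs_right by lra. nra. Qed.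

Lemma phi_cont e t : continuity_pt (phi e) t.
Proof. apply continuity_pt_filterlim. exact (ex_derive_continuous (phi e) t (ex_intro _ _ (is_derive_phi e t))). Qed.

Lemma dphi_cont e t : continuity_pt (dphi e) t.
Proof.
  apply continuity_pt_filterlim. apply filterlim_locally. intros eps.
  exists (mkposreal (eps/4) ltac:(destruct eps; simpl; lra)). intros s Hs.
  rewrite ball_R_iff in *. simpl in Hs. unfold dphi.
  pose proof (Rabs_triang_inv (s-e) (t-e)). pose proof (Rabs_triang_inv (t-e) (s-e)).
  replace (s - e - (t - e)) with (s - t) in * by ring.
  replace (t - e - (s - e)) with (-(s - t)) in * by ring. rewrite Rabs_Ropp in *.
  destruct (Rabs_def2 _ _ Hs) as [H1 H2]. apply Rabs_def1; lra.
Qed.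

Lemma deriv_gen1 (U W A : R -> R) e x dU dW dA :
  is_derive U x dU -> is_derive W x dW -> is_derive A x dA ->
  is_derive (fun z => - (phi e (U z - W z) * (A z + z))) x
    (- (dphi e (U x - W x) * (dU - dW) * (A x + x) + phi e (U x - W x) * (dA + 1))).
Proof.
  intros HU HW HA. auto_derive.
  - repeat split; try (eexists; eassumption). eexists; apply is_derive_phi.
  - replace (Derive (fun x0 : R => U x0) x) with dU by (symmetry; apply is_derive_unique; exact HU).
    replace (Derive (fun x0 : R => W x0) x) with dW by (symmetry; apply is_derive_unique; exact HW).
    replace (Derive (fun x0 : R => A x0) x) with dA by (symmetry; apply is_derive_unique; exact HA).
    replace (Derive (fun x0 : R => phi e x0) (U x + - W x)) with (dphi e (U x - W x))
      by (symmetry; apply is_derive_unique; exact (is_derive_phi e _)).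
    replace (U x + - W x) with (U x - W x) by ring. ring.
Qed.

Lemma deriv_gen2 (U W A : R -> R) e x dU dW dA :
  is_derive U x dU -> is_derive W x dW -> is_derive A x dA ->
  is_derive (fun z => phi e (U z - W z) * (A z - z)) x
    (dphi e (U x - W x) * (dU - dW) * (A x - x) + phi e (U x - W x) * (dA - 1)).
Proof.
  intros HU HW HA. auto_derive.
  - repeat split; try (eexists; eassumption). eexists; apply is_derive_phi.
  - replace (Derive (fun x0 : R => U x0) x) with dU by (symmetry; apply is_derive_unique; exact HU).
    replace (Derive (fun x0 : R => W x0) x) with dW by (symmetry; apply is_derive_unique; exact HW).
    replace (Derive (fun x0 : R => A x0) x) with dA by (symmetry; apply is_derive_unique; exact HA).
    replace (Derive (fun x0 : R => phi e x0) (U x + - W x)) with (dphi e (U x - W x))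
      by (symmetry; apply is_derive_unique; exact (is_derive_phi e _)).
    replace (U x + - W x) with (U x - W x) by ring. ring.
Qed.

Definition indO (O : pt -> Prop) (p : pt) : R := if excluded_middle_informative (O p) then 1 else 0.
Definition Gf O (u v : pt -> R) e p := indO O p * phi e (u p - v p).
Definition Gpf O (u v : pt -> R) e p := indO O p * dphi e (u p - v p).
Definition V1 O u v e (p : pt) := - (Gf O u v e p * (dy u p + fst p)).
Definition V2 O u v e (p : pt) := Gf O u v e p * (dx u p - snd p).
Definition D1 O u v e (p : pt) := - (Gpf O u v e p * (dx u p - dx v p) * (dy u p + fst p) + Gf O u v e p * (dx (dy u) p + 1)).
Definition D2 O u v e (p : pt) := Gpf O u v e p * (dy u p - dy v p) * (dx u p - snd p) + Gf O u v e p * (dy (dx u) p - 1).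

Definition Hyps (O : pt -> Prop) (u v : pt -> R) (e : R) : Prop :=
  open2 O /\ C2_on O u /\ C2_on O v /\ C0_closure O u /\ C0_closure O v /\
  (forall p, boundary2 O p -> u p = v p) /\
  (forall p, O p -> (dx u p - snd p)*(dy v p + fst p) = (dy u p + fst p)*(dx v p - snd p)) /\ 0 < e.

Lemma indO_in O p : O p -> indO O p = 1.
Proof. intros H. unfold indO. destruct (excluded_middle_informative (O p)); tauto. Qed.
Lemma indO_out O p : ~ O p -> indO O p = 0.
Proof. intros H. unfold indO. destruct (excluded_middle_informative (O p)); tauto. Qed.

Lemma dist2_refl p : dist2 p p = 0.
Proof. unfold dist2. replace ((fst p - fst p) ^ 2 + (snd p - snd p) ^ 2) with 0 by ring. apply sqrt_0. Qed.

Lemma loc_out O u v e p : Hyps O u v e -> ~ O p ->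
  exists r, 0 < r /\ forall q, dist2 p q < r -> Gf O u v e q = 0 /\ Gpf O u v e q = 0.
Proof.
  intros (HO & Hu & Hv & Hcu & Hcv & Hb & Hx & He) Hp.
  destruct (Classical_Prop.classic (closure2 O p)) as [Hc|Hc].
  - assert (Hup : u p = v p) by (apply Hb; split; auto).
    destruct (Hcu p Hc (e/2) ltac:(lra)) as [d1 [Hd1 H1]].
    destruct (Hcv p Hc (e/2) ltac:(lra)) as [d2 [Hd2 H2]].
    exists (Rmin d1 d2). split. { apply Rmin_pos; auto. }
    intros q Hq. unfold Gf, Gpf.
    destruct (Classical_Prop.classic (O q)) as [Oq|Oq].
    + assert (Cq : closure2 O q). { intros eps Heps. exists q. rewrite dist2_refl. auto. }
      specialize (H1 q Cq ltac:(eapply Rlt_le_trans; [exact Hq|apply Rmin_l])).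
      specialize (H2 q Cq ltac:(eapply Rlt_le_trans; [exact Hq|apply Rmin_r])).
      apply Rabs_def2 in H1. apply Rabs_def2 in H2.
      destruct (phi_le e (u q - v q)) as [E1 E2]. lra. rewrite E1, E2. split; ring.
    + rewrite indO_out by auto. split; ring.
  - unfold closure2 in Hc.
    apply Classical_Pred_Type.not_all_ex_not in Hc. destruct Hc as [eps Heps].
    apply Classical_Prop.imply_to_and in Heps. destruct Heps as [Heps Hn].
    exists eps. split; auto. intros q Hq. unfold Gf, Gpf.
    rewrite indO_out. split; ring. intros Oq. apply Hn. exists q. auto.
Qed.

Lemma loc_in O u v e p : Hyps O u v e -> O p ->
  exists r, 0 < r /\ forall q, dist2 p q < r -> O q.
Proof. intros (HO & _) Hp. apply HO; auto. Qed.

Lemma ball_locally_x (P : pt -> Prop) x y r : 0 < r ->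
  (forall q, dist2 (x,y) q < r -> P q) -> locally x (fun z => P (z,y)).
Proof. intros Hr H. apply (locally_2d_1d_const_y (fun a b => P (a,b))). eapply ball_locally_2d; eauto. Qed.
Lemma ball_locally_y (P : pt -> Prop) x y r : 0 < r ->
  (forall q, dist2 (x,y) q < r -> P q) -> locally y (fun z => P (x,z)).
Proof. intros Hr H. apply (locally_2d_1d_const_x (fun a b => P (a,b))). eapply ball_locally_2d; eauto. Qed.

Lemma dV1 O u v e x y : Hyps O u v e -> is_derive (fun z => V1 O u v e (z,y)) x (D1 O u v e (x,y)).
Proof.
  intros HH. destruct (Classical_Prop.classic (O (x,y))) as [Op|Op].
  - destruct (loc_in O u v e _ HH Op) as [r [Hr Hball]].
    pose proof HH as (HO & Hu & Hv & _).
    destruct (Hu _ Op) as (ux & uy & uxx & uxy & uyx & _).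
    destruct (Hv _ Op) as (vx & _).
    apply (is_derive_ext_loc (fun z => - (phi e (u (z,y) - v (z,y)) * (dy u (z,y) + z)))).
    + apply (ball_locally_x (fun q => - (phi e (u q - v q) * (dy u q + fst q)) = V1 O u v e q) x y r Hr).
      intros q Hq. unfold V1, Gf. rewrite indO_in by auto. ring.
    + replace (D1 O u v e (x,y)) with
        (- (dphi e (u (x,y) - v (x,y)) * (dx u (x,y) - dx v (x,y)) * (dy u (x,y) + x) + phi e (u (x,y) - v (x,y)) * (dx (dy u) (x,y) + 1))).
      2:{ unfold D1, Gf, Gpf. rewrite indO_in by auto. simpl. ring. }
      apply (deriv_gen1 (fun z => u (z,y)) (fun z => v (z,y)) (fun z => dy u (z,y))).
      * exact (Derive_correct _ _ ux).
      * exact (Derive_correct _ _ vx).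
      * exact (Derive_correct _ _ uyx).
  - destruct (loc_out O u v e _ HH Op) as [r [Hr Hball]].
    apply (is_derive_ext_loc (fun _ => 0)).
    + apply (ball_locally_x (fun q => 0 = V1 O u v e q) x y r Hr).
      intros q Hq. unfold V1. rewrite (proj1 (Hball q Hq)). ring.
    + replace (D1 O u v e (x,y)) with 0. apply (is_derive_const (V:=R_NormedModule) 0).
      destruct (Hball (x,y) ltac:(rewrite dist2_refl; auto)) as [E1 E2].
      unfold D1. rewrite E1, E2. ring.
Qed.

Lemma dV2 O u v e x y : Hyps O u v e -> is_derive (fun z => V2 O u v e (x,z)) y (D2 O u v e (x,y)).
Proof.
  intros HH. destruct (Classical_Prop.classic (O (x,y))) as [Op|Op].
  - destruct (loc_in O u v e _ HH Op) as [r [Hr Hball]].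
    pose proof HH as (HO & Hu & Hv & _).
    destruct (Hu _ Op) as (ux & uy & uxx & uxy & uyx & _).
    destruct (Hv _ Op) as (vx & vy & _).
    apply (is_derive_ext_loc (fun z => phi e (u (x,z) - v (x,z)) * (dx u (x,z) - z))).
    + apply (ball_locally_y (fun q => phi e (u q - v q) * (dx u q - snd q) = V2 O u v e q) x y r Hr).
      intros q Hq. unfold V2, Gf. rewrite indO_in by auto. ring.
    + replace (D2 O u v e (x,y)) with
        (dphi e (u (x,y) - v (x,y)) * (dy u (x,y) - dy v (x,y)) * (dx u (x,y) - y) + phi e (u (x,y) - v (x,y)) * (dy (dx u) (x,y) - 1)).
      2:{ unfold D2, Gf, Gpf. rewrite indO_in by auto. simpl. ring. }
      apply (deriv_gen2 (fun z => u (x,z)) (fun z => v (x,z)) (fun z => dx u (x,z))).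
      * exact (Derive_correct _ _ uy).
      * exact (Derive_correct _ _ vy).
      * exact (Derive_correct _ _ uxy).
  - destruct (loc_out O u v e _ HH Op) as [r [Hr Hball]].
    apply (is_derive_ext_loc (fun _ => 0)).
    + apply (ball_locally_y (fun q => 0 = V2 O u v e q) x y r Hr).
      intros q Hq. unfold V2. rewrite (proj1 (Hball q Hq)). ring.
    + replace (D2 O u v e (x,y)) with 0. apply (is_derive_const (V:=R_NormedModule) 0).
      destruct (Hball (x,y) ltac:(rewrite dist2_refl; auto)) as [E1 E2].
      unfold D2. rewrite E1, E2. ring.
Qed.

Lemma cont_gen O u v e (F E : pt -> R) : Hyps O u v e ->
  (forall q, O q -> E q = F q) ->
  (forall q, Gf O u v e q = 0 -> Gpf O u v e q = 0 -> F q = 0) ->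
  (forall x y, O (x,y) -> continuity_2d_pt (fun a b => E (a,b)) x y) ->
  forall x y, continuity_2d_pt (fun a b => F (a,b)) x y.
Proof.
  intros HH HE HF HC x y. destruct (Classical_Prop.classic (O (x,y))) as [Op|Op].
  - destruct (loc_in O u v e _ HH Op) as [r [Hr Hball]].
    apply (continuity_2d_pt_ext_loc (fun a b => E (a,b))); auto.
    apply (ball_locally_2d (fun q => E q = F q) x y r Hr). intros q Hq. auto.
  - destruct (loc_out O u v e _ HH Op) as [r [Hr Hball]].
    apply (continuity_2d_pt_ext_loc (fun _ _ => 0)).
    + apply (ball_locally_2d (fun q => 0 = F q) x y r Hr). intros q Hq.
      destruct (Hball q Hq). symmetry; auto.
    + apply continuity_2d_pt_const.
Qed.

Ltac cont_tac :=
  repeat first [ (apply continuity_1d_2d_pt_comp; [first [apply phi_cont | apply dphi_cont] |])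
   | apply continuity_2d_pt_opp | apply continuity_2d_pt_plus | apply continuity_2d_pt_minus
   | apply continuity_2d_pt_mult | apply continuity_2d_pt_id1 | apply continuity_2d_pt_id2
   | apply continuity_2d_pt_const
   | (apply cont_at_2d; assumption) ].

Lemma cG O u v e x y : Hyps O u v e -> continuity_2d_pt (fun a b => Gf O u v e (a,b)) x y.
Proof.
  intros HH. apply (cont_gen O u v e _ (fun q => phi e (u q - v q)) HH); auto.
  - intros q Oq. unfold Gf. rewrite indO_in by auto. ring.
  - intros a b Op. pose proof HH as (HO & Hu & Hv & _).
    destruct (Hu _ Op) as (_ & _ & _ & _ & _ & _ & cu & cux & cuy & cuxx & cuxy & cuyx & cuyy).
    destruct (Hv _ Op) as (_ & _ & _ & _ & _ & _ & cv & cvx & cvy & _).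
    cont_tac.
Qed.

Lemma cV1 O u v e x y : Hyps O u v e -> continuity_2d_pt (fun a b => V1 O u v e (a,b)) x y.
Proof.
  intros HH. apply (cont_gen O u v e _ (fun q => - (phi e (u q - v q) * (dy u q + fst q))) HH); auto.
  - intros q Oq. unfold V1, Gf. rewrite indO_in by auto. ring.
  - intros q E1 E2. unfold V1. rewrite E1. ring.
  - intros a b Op. pose proof HH as (HO & Hu & Hv & _).
    destruct (Hu _ Op) as (_ & _ & _ & _ & _ & _ & cu & cux & cuy & cuxx & cuxy & cuyx & cuyy).
    destruct (Hv _ Op) as (_ & _ & _ & _ & _ & _ & cv & cvx & cvy & _).
    cbn [fst snd]. cont_tac.
Qed.

Lemma cV2 O u v e x y : Hyps O u v e -> continuity_2d_pt (fun a b => V2 O u v e (a,b)) x y.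
Proof.
  intros HH. apply (cont_gen O u v e _ (fun q => phi e (u q - v q) * (dx u q - snd q)) HH); auto.
  - intros q Oq. unfold V2, Gf. rewrite indO_in by auto. ring.
  - intros q E1 E2. unfold V2. rewrite E1. ring.
  - intros a b Op. pose proof HH as (HO & Hu & Hv & _).
    destruct (Hu _ Op) as (_ & _ & _ & _ & _ & _ & cu & cux & cuy & cuxx & cuxy & cuyx & cuyy).
    destruct (Hv _ Op) as (_ & _ & _ & _ & _ & _ & cv & cvx & cvy & _).
    cbn [fst snd]. cont_tac.
Qed.

Lemma cD1 O u v e x y : Hyps O u v e -> continuity_2d_pt (fun a b => D1 O u v e (a,b)) x y.
Proof.
  intros HH. apply (cont_gen O u v e _ (fun q => - (dphi e (u q - v q) * (dx u q - dx v q) * (dy u q + fst q) + phi e (u q - v q) * (dx (dy u) q + 1))) HH); auto.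
  - intros q Oq. unfold D1, Gf, Gpf. rewrite indO_in by auto. ring.
  - intros q E1 E2. unfold D1. rewrite E1, E2. ring.
  - intros a b Op. pose proof HH as (HO & Hu & Hv & _).
    destruct (Hu _ Op) as (_ & _ & _ & _ & _ & _ & cu & cux & cuy & cuxx & cuxy & cuyx & cuyy).
    destruct (Hv _ Op) as (_ & _ & _ & _ & _ & _ & cv & cvx & cvy & _).
    cbn [fst snd]. cont_tac.
Qed.

Lemma cD2 O u v e x y : Hyps O u v e -> continuity_2d_pt (fun a b => D2 O u v e (a,b)) x y.
Proof.
  intros HH. apply (cont_gen O u v e _ (fun q => dphi e (u q - v q) * (dy u q - dy v q) * (dx u q - snd q) + phi e (u q - v q) * (dy (dx u) q - 1)) HH); auto.
  - intros q Oq. unfold D2, Gf, Gpf. rewrite indO_in by auto. ring.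
  - intros q E1 E2. unfold D2. rewrite E1, E2. ring.
  - intros a b Op. pose proof HH as (HO & Hu & Hv & _).
    destruct (Hu _ Op) as (_ & _ & _ & _ & _ & _ & cu & cux & cuy & cuxx & cuxy & cuyx & cuyy).
    destruct (Hv _ Op) as (_ & _ & _ & _ & _ & _ & cv & cvx & cvy & _).
    cbn [fst snd]. cont_tac.
Qed.

Lemma schwarz_u O u p : open2 O -> C2_on O u -> O p -> dx (dy u) p = dy (dx u) p.
Proof.
  intros HO Hu Op. destruct p as [x y].
  destruct (HO _ Op) as [r [Hr Hball]].
  destruct (Hu _ Op) as (_ & _ & _ & _ & _ & _ & cu & cux & cuy & cuxx & cuxy & cuyx & cuyy).
  exact (Schwarz (fun a b => u (a,b)) x y
    (ball_locally_2d (fun q => ex_dx u q /\ ex_dy u q /\ ex_dx (dy u) q /\ ex_dy (dx u) q) x y r Hr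
      (fun q Hq => match Hu q (Hball q Hq) with conj a (conj b (conj _ (conj d (conj e _)))) => conj a (conj b (conj e d)) end))
    (cont_at_2d _ _ _ cuyx) (cont_at_2d _ _ _ cuxy)).
Qed.

Lemma div_id O u v e p : Hyps O u v e -> D1 O u v e p + D2 O u v e p = -2 * Gf O u v e p.
Proof.
  intros HH. destruct (Classical_Prop.classic (O p)) as [Op|Op].
  - pose proof HH as (HO & Hu & Hv & _ & _ & _ & Hx & _).
    pose proof (schwarz_u O u p HO Hu Op) as Hs.
    pose proof (Hx p Op) as Hc.
    unfold D1, D2, Gf, Gpf. rewrite indO_in by auto. rewrite Hs.
    set (a1 := dx u p - snd p) in *. set (a2 := dy u p + fst p) in *.
    replace (dx u p - dx v p) with (a1 - (dx v p - snd p)) by (unfold a1; ring).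
    replace (dy u p - dy v p) with (a2 - (dy v p + fst p)) by (unfold a2; ring).
    set (b1 := dx v p - snd p) in *. set (b2 := dy v p + fst p) in *.
    replace (dy (dx u) p - 1) with ((dy (dx u) p + 1) - 2) by ring.
    transitivity (1 * dphi e (u p - v p) * (a2 * b1 - a1 * b2) + -2 * (1 * phi e (u p - v p))); [ring|].
    rewrite Hc. ring.
  - destruct (loc_out O u v e _ HH Op) as [r [Hr Hball]].
    destruct (Hball p ltac:(rewrite dist2_refl; auto)) as [E1 E2].
    unfold D1, D2. rewrite E1, E2. ring.
Qed.

Lemma G_ge0 O u v e q : 0 <= Gf O u v e q.
Proof.
  unfold Gf, indO. destruct (excluded_middle_informative (O q)).
  - pose proof (phi_ge0 e (u q - v q)). lra.
  - lra.
Qed.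

Lemma V_out O u v e q : ~ O q -> V1 O u v e q = 0 /\ V2 O u v e q = 0.
Proof. intros H. unfold V1, V2, Gf. rewrite indO_out by auto. split; ring. Qed.

Lemma exG O u v e x a b : Hyps O u v e -> ex_RInt (fun t => Gf O u v e (x,t)) a b.
Proof. intros HH. apply (ex_RInt_continuous (V:=R_CompleteNormedModule)). intros z _. apply (cont2d_1d_x (fun a b => Gf O u v e (a,b))). apply cG; auto. Qed.

Lemma RInt_D1 O u v e K x : Hyps O u v e -> (forall q, O q -> Rabs (snd q) < K) ->
  RInt (fun t => D1 O u v e (x,t)) (-K) K = -2 * RInt (fun t => Gf O u v e (x,t)) (-K) K.
Proof.
  intros HH HK.
  pose proof (RInt_correct _ _ _ (exG O u v e x (-K) K HH)) as iG.
  assert (iD2 : is_RInt (fun t => D2 O u v e (x,t)) (-K) K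
     (minus (V2 O u v e (x,K)) (V2 O u v e (x,-K)))).
  { apply (is_RInt_derive (V:=R_CompleteNormedModule) (fun t => V2 O u v e (x,t))).
    - intros z _. apply dV2; auto.
    - intros z _. apply (cont2d_1d_x (fun a b => D2 O u v e (a,b))). apply cD2; auto. }
  rewrite (proj2 (V_out O u v e (x,K) ltac:(intros Hq; specialize (HK _ Hq); simpl in HK; pose proof (Rle_abs K); lra))) in iD2.
  rewrite (proj2 (V_out O u v e (x,-K) ltac:(intros Hq; specialize (HK _ Hq); simpl in HK; rewrite Rabs_Ropp in HK; pose proof (Rle_abs K); lra))) in iD2.
  pose proof (is_RInt_minus _ _ _ _ _ _ (is_RInt_scal _ _ _ (-2) _ iG) iD2) as iD1.
  apply is_RInt_unique.
  apply (is_RInt_ext (fun y => minus (scal (-2) (Gf O u v e (x,y))) (D2 O u v e (x,y)))).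
  - intros z _. pose proof (div_id O u v e (x,z) HH). unfold minus, plus, opp, scal. simpl. unfold mult; simpl. lra.
  - replace (-2 * RInt (fun t => Gf O u v e (x,t)) (-K) K) with
      (minus (scal (-2) (RInt (fun t => Gf O u v e (x,t)) (-K) K)) (@minus R_AbelianGroup 0 0)).
    exact iD1. unfold minus, plus, opp, scal. simpl. unfold mult; simpl. ring.
Qed.

Lemma H_deriv O u v e (K x : R) : Hyps O u v e -> (forall q, O q -> Rabs (snd q) < K) ->
  is_derive (fun z => RInt (fun t => V1 O u v e (z,t)) (-K) K) x
    (-2 * RInt (fun t => Gf O u v e (x,t)) (-K) K).
Proof.
  intros HH HK.
  assert (E : RInt (fun t => Derive (fun z => V1 O u v e (z,t)) x) (-K) K = -2 * RInt (fun t => Gf O u v e (x,t)) (-K) K).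
  { rewrite <- (RInt_D1 O u v e K x HH HK). apply RInt_ext.
    intros t _. apply is_derive_unique. apply dV1; auto. }
  assert (Hd : is_derive (fun z => RInt (fun t => V1 O u v e (z,t)) (-K) K) x
      (RInt (fun t => Derive (fun z => V1 O u v e (z,t)) x) (-K) K)).
  { apply (is_derive_RInt_param (fun a b => V1 O u v e (a,b))).
  - apply filter_forall. intros x0 t _. eexists. apply dV1; auto.
  - intros t _. apply (continuity_2d_pt_ext (fun a b => D1 O u v e (a,b))).
    + intros a b. symmetry. apply is_derive_unique. apply dV1; auto.
    + apply cD1; auto.
  - apply filter_forall. intros y0. apply (ex_RInt_continuous (V:=R_CompleteNormedModule)).
    intros z _. apply (cont2d_1d_x (fun a b => V1 O u v e (a,b))). apply cV1; auto. }
  rewrite E in Hd. exact Hd.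
Qed.

Lemma H_end O u v e K x : (forall q, O q -> Rabs (fst q) < K) -> Rabs x = K ->
  RInt (fun t => V1 O u v e (x,t)) (-K) K = 0.
Proof.
  intros HK Hx. rewrite (RInt_ext _ (fun _ => 0)).
  - rewrite RInt_const. unfold scal; simpl; unfold mult; simpl. ring.
  - intros t _. apply V_out. intros Hq. specialize (HK _ Hq). simpl in HK. lra.
Qed.

Lemma F_ge0 O u v e K x : Hyps O u v e -> 0 <= K -> 0 <= RInt (fun t => Gf O u v e (x,t)) (-K) K.
Proof.
  intros HH HK. apply RInt_ge_0. lra. apply exG; auto. intros; apply G_ge0.
Qed.

Lemma F_pos O u v e K x0 y0 : Hyps O u v e -> -K < y0 < K -> 0 < Gf O u v e (x0,y0) ->
  0 < RInt (fun t => Gf O u v e (x0,t)) (-K) K.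
Proof.
  intros HH Hy Hg.
  set (g := fun t => Gf O u v e (x0,t)).
  assert (gc : forall t, continuous g t).
  { intros t. apply (cont2d_1d_x (fun a b => Gf O u v e (a,b))). apply cG; auto. }
  assert (exg : forall a b, ex_RInt g a b).
  { intros a b. apply (ex_RInt_continuous (V:=R_CompleteNormedModule)). intros; apply gc. }
  destruct (proj1 (filterlim_locally _ _) (gc y0) (mkposreal (g y0 / 2) ltac:(unfold g; lra))) as [dl Hdl].
  set (d := Rmin (dl/2) (Rmin ((y0+K)/2) ((K-y0)/2))).
  assert (Hd1 : d <= dl/2) by apply Rmin_l.
  assert (Hd2 : d <= (y0+K)/2) by (eapply Rle_trans; [apply Rmin_r|apply Rmin_l]).
  assert (Hd3 : d <= (K-y0)/2) by (eapply Rle_trans; [apply Rmin_r|apply Rmin_r]).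
  assert (Hd0 : 0 < d).
  { unfold d. destruct dl as [dl Hdlp]. simpl. repeat apply Rmin_pos; lra. }
  pose proof (RInt_Chasles g (-K) (y0-d) K (exg _ _) (exg _ _)) as C1.
  pose proof (RInt_Chasles g (y0-d) (y0+d) K (exg _ _) (exg _ _)) as C2.
  unfold plus in C1, C2; simpl in C1, C2.
  assert (P1 : 0 <= RInt g (-K) (y0-d)).
  { apply RInt_ge_0. lra. apply exg. intros; unfold g; apply G_ge0. }
  assert (P3 : 0 <= RInt g (y0+d) K).
  { apply RInt_ge_0. lra. apply exg. intros; unfold g; apply G_ge0. }
  assert (P2 : 0 < RInt g (y0-d) (y0+d)).
  { apply RInt_gt_0. lra. 2:{ intros; apply gc. }
    intros t Ht. assert (Hb : ball y0 dl t).
    { rewrite ball_R_iff. apply Rabs_def1; lra. }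
    specialize (Hdl t Hb). rewrite ball_R_iff in Hdl. simpl in Hdl.
    apply Rabs_def2 in Hdl. lra. }
  fold g. lra.
Qed.

Lemma half O u v e M : Hyps O u v e ->
  (forall p, O p -> Rabs (fst p) <= M /\ Rabs (snd p) <= M) ->
  forall p, O p -> u p - v p <= e.
Proof.
  intros HH HM [x0 y0] Op. apply Rnot_lt_le. intros Hlt.
  set (K := Rabs M + 1).
  assert (HKx : forall q, O q -> Rabs (fst q) < K).
  { intros q Oq. destruct (HM q Oq). pose proof (Rle_abs M). unfold K. lra. }
  assert (HKy : forall q, O q -> Rabs (snd q) < K).
  { intros q Oq. destruct (HM q Oq). pose proof (Rle_abs M). unfold K. lra. }
  assert (Kpos : 0 < K) by (unfold K; pose proof (Rabs_pos M); lra).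
  set (H := fun z => RInt (fun t => V1 O u v e (z,t)) (-K) K).
  set (F := fun z => RInt (fun t => Gf O u v e (z,t)) (-K) K).
  assert (dH : forall z, is_derive H z (-2 * F z)).
  { intros z. apply H_deriv; auto. }
  assert (Fge : forall z, 0 <= F z).
  { intros z. apply F_ge0; auto. lra. }
  assert (cH : forall z, continuity_pt H z).
  { intros z. apply continuity_pt_filterlim. exact (ex_derive_continuous H z (ex_intro _ _ (dH z))). }
  assert (Hm : H (-K) = 0).
  { apply H_end with (K := K); auto. rewrite Rabs_Ropp. apply Rabs_right. lra. }
  assert (Hp : H K = 0).
  { apply H_end with (K := K); auto. apply Rabs_right. lra. }
  assert (Hz : forall z, -K <= z <= K -> H z = 0).
  { intros z Hzr.
    destruct (MVT_gen H (-K) z (fun z => -2 * F z)) as [c [_ Hc]].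
    { intros; apply dH. } { intros; apply cH. }
    destruct (MVT_gen H z K (fun z => -2 * F z)) as [c' [_ Hc']].
    { intros; apply dH. } { intros; apply cH. }
    pose proof (Fge c). pose proof (Fge c').
    assert (H z <= 0) by nra. assert (0 <= H z) by nra. lra. }
  pose proof (HKx _ Op) as Hx0. simpl in Hx0. pose proof (HKy _ Op) as Hy0. simpl in Hy0.
  assert (D0 : is_derive H x0 0).
  { apply (is_derive_ext_loc (fun _ => 0)).
    - exists (mkposreal (K - Rabs x0) ltac:(lra)). intros z Hzb. rewrite ball_R_iff in Hzb. simpl in Hzb.
      symmetry. apply Hz. pose proof (Rabs_triang_inv z x0). assert (Rabs z < K) by lra.
      apply Rabs_def2 in H1. lra.
    - apply (is_derive_const (V:=R_NormedModule) 0). }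
  pose proof (is_derive_unique _ _ _ D0) as E0. rewrite (is_derive_unique _ _ _ (dH x0)) in E0.
  assert (Fp : 0 < F x0).
  { apply F_pos with (y0 := y0); auto.
    - apply Rabs_def2 in Hy0. lra.
    - unfold Gf. rewrite indO_in by auto. rewrite Rmult_1_l. apply phi_gt. lra. }
  lra.
Qed.

Lemma cross_of_N (a1 a2 b1 b2 : R) :
  ~ (a1 = 0 /\ a2 = 0) -> ~ (b1 = 0 /\ b2 = 0) ->
  a1 / sqrt (a1^2 + a2^2) = b1 / sqrt (b1^2 + b2^2) ->
  a2 / sqrt (a1^2 + a2^2) = b2 / sqrt (b1^2 + b2^2) ->
  a1 * b2 = a2 * b1.
Proof.
  intros Ha Hb E1 E2.
  assert (pa : 0 < a1^2 + a2^2).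
  { destruct (Req_dec a1 0); destruct (Req_dec a2 0); try tauto; nra. }
  assert (pb : 0 < b1^2 + b2^2).
  { destruct (Req_dec b1 0); destruct (Req_dec b2 0); try tauto; nra. }
  set (ra := sqrt (a1^2 + a2^2)) in *. set (rb := sqrt (b1^2 + b2^2)) in *.
  assert (ra0 : 0 < ra) by (apply sqrt_lt_R0; auto).
  assert (rb0 : 0 < rb) by (apply sqrt_lt_R0; auto).
  assert (F1 : a1 * rb = b1 * ra).
  { replace (a1 * rb) with (a1 / ra * ra * rb) by (field; lra). rewrite E1. field; lra. }
  assert (F2 : a2 * rb = b2 * ra).
  { replace (a2 * rb) with (a2 / ra * ra * rb) by (field; lra). rewrite E2. field; lra. }
  apply (Rmult_eq_reg_r rb); [|lra].
  replace (a1 * b2 * rb) with ((a1 * rb) * b2) by ring.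
  replace (a2 * b1 * rb) with ((a2 * rb) * b1) by ring.
  rewrite F1, F2. ring.
Qed.

Lemma cross O (u v : pt -> R) :
  (forall p, O p -> ~ Sset u p -> ~ Sset v p -> Nfield u p = Nfield v p) ->
  forall p, O p -> (dx u p - snd p)*(dy v p + fst p) = (dy u p + fst p)*(dx v p - snd p).
Proof.
  intros HN p Op.
  destruct (Classical_Prop.classic (Sset u p)) as [Su|Su].
  { destruct Su as [S1 S2]. rewrite S1, S2. ring. }
  destruct (Classical_Prop.classic (Sset v p)) as [Sv|Sv].
  { destruct Sv as [S1 S2]. rewrite S1, S2. ring. }
  pose proof (HN p Op Su Sv) as E. unfold Nfield in E. cbv zeta in E.
  injection E as E1 E2.
  apply cross_of_N; auto.
Qed.

Theorem lemma5p3 (Omega : pt -> Prop) (u v : pt -> R) :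
  domain2 Omega -> bounded2 Omega ->
  C2_on Omega u -> C0_closure Omega u ->
  C2_on Omega v -> C0_closure Omega v ->
  (forall p, Omega p -> ~ Sset u p -> ~ Sset v p -> Nfield u p = Nfield v p) ->
  (forall p, boundary2 Omega p -> u p = v p) ->
  forall p, Omega p -> u p = v p.
Proof.
  intros [_ [HO _]] [M HM] Hu Hcu Hv Hcv HN Hb p Op.
  assert (A : forall e, 0 < e -> u p - v p <= e).
  { intros e He. apply (half Omega u v e M); auto.
    exact (conj HO (conj Hu (conj Hv (conj Hcu (conj Hcv (conj Hb (conj (cross Omega u v HN) He))))))). }
  assert (B : forall e, 0 < e -> v p - u p <= e).
  { intros e He. apply (half Omega v u e M); auto.
    refine (conj HO (conj Hv (conj Hu (conj Hcv (conj Hcu (conj _ (conj (cross Omega v u _) He))))))).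
    - intros q Hq. symmetry. auto.
    - intros q Oq S1 S2. symmetry. auto. }
  destruct (Rtotal_order (u p) (v p)) as [Hl|[Hq|Hg]]; auto.
  - specialize (B ((v p - u p)/2) ltac:(lra)). lra.
  - specialize (A ((u p - v p)/2) ltac:(lra)). lra.
Qed.
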